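(* In the setting of the context, let $(h_1,h_2)\in\mathbb C(s)^2$ satisfy $\widetilde\gamma_1h_1+\widetilde\gamma_2h_2+\omega=0$, $h_1^{\iota_1}=h_1$, $h_2^{\iota_2}=h_2$. If $P$ is a pole of $h_1$ distinct from $0$ and $\infty$, then there exist integers $m,n\ge0$ such that $\sigma^{-m}P\in\mathcal L_1^-$ and $\sigma^nP\in\mathcal L_1^+$. Likewise, if $P$ is a pole of $h_2$ distinct from $0$ and $\infty$, then there exist integers $m,n\ge0$ such that $\sigma^{-m}P\in\mathcal L_2^-$ and $\sigma^nP\in\mathcal L_2^+$.
   Context: For a genus-zero weighted quadrant walk model (step set one of the five genus-zero sets, step weights $d_{i,j}>0$, Boltzmann weights $a,b>0$), $A=1-1/a$, $B=1-1/b$, $\omega=1-A-B$. $s\mapsto(x(s),y(s))$ is a fixed rational parametrization by $\mathbb P^1$ of the kernel curve (for a fixed real $t$ transcendental over $\mathbb Q((d_{i,j}),a,b)$), with $x(1/s)=x(s)$, $y(q/s)=y(s)$ for a fixed real $q$ not a root of unity; $\iota_1(s)=1/s$, $\iota_2(s)=q/s$, $\sigma(s)=qs$, $h^\tau=h\circ\tau$. $\widetilde\gamma_1=A/x(s)-td_{1,-1}/y(s)$ and $\widetilde\gamma_2=B/y(s)-td_{-1,1}/x(s)$ have divisors $(\widetilde\gamma_1)=P_1+P_2-0-\infty$ and $(\widetilde\gamma_2)=P_3+P_4-0-\infty$ with $P_i\notin\{0,\infty\}$. Define $\mathcal L_1^-=\{P_1,P_2,\iota_2P_3,\iota_2P_4\}$,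 $\mathcal L_1^+=\{\iota_1P_1,\iota_1P_2,\sigma^{-1}P_3,\sigma^{-1}P_4\}$, $\mathcal L_2^-=\{\sigma P_1,\sigma P_2,\iota_2P_3,\iota_2P_4\}$, $\mathcal L_2^+=\{\iota_1P_1,\iota_1P_2,P_3,P_4\}$. *)

(* Defs.v *)
(* Rational functions C(s) are modelled as the fraction
   field {fraction {poly C}} of C[s], with C = R[i] for a real closed field R. *)
From HB Require Import structures.
From mathcomp Require Import all_boot all_order all_algebra.
From mathcomp Require Import generic_quotient fraction complex.
From mathcomp Require Import mpoly.

Set Implicit Arguments.
Unset Strict Implicit.
Unset Printing Implicit Defensive.

Import Order.TTheory GRing.Theory Num.Theory.
Local Open Scope ring_scope.

Notation "x %:F" := (@FracField.tofrac _ x) : ring_scope.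

Section RatFun.
Variable F : fieldType.
Local Notation RF := {fraction {poly F}}.

Definition fX : RF := ('X)%:F.
Definition fC (c : F) : RF := (c%:P)%:F.

Definition peval_frac (p : {poly F}) (u : RF) : RF :=
  (map_poly fC p).[u].

(* composition h o u  (h^u in the paper's notation h^tau = h o tau),
   computed on a representative numerator/denominator pair of h *)
Definition fcomp (h u : RF) : RF :=
  let r := repr h in peval_frac \n_r u / peval_frac \d_r u.

Definition iota1 : RF := fX^-1.
Definition iota2 (q : F) : RF := fC q / fX.
Definition sigma (q : F) : RF := fC q * fX.

Definition fpole (h : RF) (P : F) : Prop :=
  ~ exists a b : {poly F}, b.[P] != 0 /\ h = a%:F / b%:F.

Definition ford (c : F) (h : RF) : int :=
  (mup c \n_(repr h))%:Z - (mup c \d_(repr h))%:Z.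
Definition ford_inf (h : RF) : int :=
  (size \d_(repr h))%:Z - (size \n_(repr h))%:Z.

Definition divisor_is_2zeros (h : RF) (Q1 Q2 : F) : Prop :=
  [/\ h != 0,
      forall c : F, ford c h = (c == Q1)%:Z + (c == Q2)%:Z - (c == 0)%:Z
    & ford_inf h = - 1].

(* evaluation of a bivariate polynomial P(X,Y) (inner variable X) at (u,v) *)
Definition peval2_frac (P : {poly {poly F}}) (u v : RF) : RF :=
  (map_poly (fun p => peval_frac p u) P).[v].

End RatFun.

Section Model.
Variable R : rcfType.
Local Notation C := R[i].
Local Notation RF := {fraction {poly C}}.

Definition rc (r : R) : C := (r%:C)%C.

(* step weights: d i j is the weight d_{i-1,j-1} of the step (i-1,j-1) *)
(* kernel  xy (1 - t sum d_{i,j} x^i y^j) = xy - t sum d_{i,j} x^{i+1} y^{j+1},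
   evaluated at rational functions X, Y *)
Definition kernel_eval (d : 'I_3 -> 'I_3 -> R) (t : R) (X Y : RF) : RF :=
  X * Y - fC (rc t) *
    \sum_(i < 3) \sum_(j < 3) fC (rc (d i j)) * X ^+ i * Y ^+ j.

Definition params (d : 'I_3 -> 'I_3 -> R) (a b : R) : 'I_11 -> C :=
  fun k => if (k < 9)%N then rc (d (inord (k %/ 3)) (inord (k %% 3)))
           else if k == 9 :> nat then rc a else rc b.

(* t is transcendental over Q(params): it is not a root of any polynomial
   with coefficients in Q[params] which is nonzero after evaluation *)
Definition transcendental_over (n : nat) (v : 'I_n -> C) (t : C) : Prop :=
  forall p : {poly {mpoly rat[n]}},
    let p' := map_poly (mmap ratr v) p in p' != 0 -> ~~ root p' t.

Definition Acoef (a : R) : R := 1 - a^-1.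
Definition Bcoef (b : R) : R := 1 - b^-1.
Definition omega (a b : R) : R := 1 - Acoef a - Bcoef b.

Definition gamma1 (d : 'I_3 -> 'I_3 -> R) (a t : R) (x y : RF) : RF :=
  fC (rc (Acoef a)) / x - fC (rc (t * d 2 0)) / y.
Definition gamma2 (d : 'I_3 -> 'I_3 -> R) (b t : R) (x y : RF) : RF :=
  fC (rc (Bcoef b)) / y - fC (rc (t * d 0 2)) / x.

Definition L1m (q : R) (P1 P2 P3 P4 : C) : seq C :=
  [:: P1; P2; rc q / P3; rc q / P4].
Definition L1p (q : R) (P1 P2 P3 P4 : C) : seq C :=
  [:: P1^-1; P2^-1; P3 / rc q; P4 / rc q].
Definition L2m (q : R) (P1 P2 P3 P4 : C) : seq C :=
  [:: rc q * P1; rc q * P2; rc q / P3; rc q / P4].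
Definition L2p (q : R) (P1 P2 P3 P4 : C) : seq C :=
  [:: P1^-1; P2^-1; P3; P4].

End Model.

(* Main.v *)
Require Import Defs.
From HB Require Import structures.
From mathcomp Require Import all_boot all_order all_algebra.
From mathcomp Require Import generic_quotient fraction complex.
From mathcomp Require Import mpoly.
From mathcomp Require Import ring.

Import Order.TTheory GRing.Theory Num.Theory.
Local Open Scope ring_scope.

Set Implicit Arguments.
Unset Strict Implicit.

Section Gen.
Variable F : fieldType.
Local Notation RF := {fraction {poly F}}.

Lemma frac_numden (x : RF) :
  x = (\n_(repr x))%:F / (\d_(repr x))%:F.
Proof.
have dF : (\d_(repr x))%:F != 0 :> RF by rewrite tofrac_eq0 denom_ratioP.
apply: (mulIf dF); rewrite mulfVK //.
rewrite -{1}[x]reprK.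
unlock FracField.tofrac.
rewrite /= !piE; apply/eqmodP; rewrite /= FracField.equivfE /FracField.mulf.
rewrite !numden_Ratio ?oner_neq0 ?mulf_neq0 ?denom_ratioP ?oner_neq0 //.
by rewrite !mulr1 mulrC.
Qed.

Definition freg (h : RF) (P : F) :=
  exists a b : {poly F}, b.[P] != 0 /\ h = a%:F / b%:F.

Lemma fpoleE h P : fpole h P <-> ~ freg h P.
Proof. by []. Qed.

Lemma tofrac_neq0 (b : {poly F}) (P : F) : b.[P] != 0 -> b%:F != 0 :> RF.
Proof.
move=> H; rewrite tofrac_eq0; apply: contraNneq H => ->; by rewrite horner0.
Qed.


Lemma freg_poly p P : freg (p%:F) P.
Proof. exists p, 1; rewrite hornerC oner_neq0 tofrac1 divr1; split => //. Qed.

Lemma freg_add f g P : freg f P -> freg g P -> freg (f + g) P.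
Proof.
move=> [a1 [b1 [H1 ->]]] [a2 [b2 [H2 ->]]].
exists (a1 * b2 + a2 * b1), (b1 * b2); split.
  by rewrite hornerM mulf_neq0.
have n1 := tofrac_neq0 H1; have n2 := tofrac_neq0 H2.
by rewrite (addf_div _ _ n1 n2) tofracD !tofracM.
Qed.

Lemma freg_mul f g P : freg f P -> freg g P -> freg (f * g) P.
Proof.
move=> [a1 [b1 [H1 ->]]] [a2 [b2 [H2 ->]]].
exists (a1 * a2), (b1 * b2); split.
  by rewrite hornerM mulf_neq0.
have n1 := tofrac_neq0 H1; have n2 := tofrac_neq0 H2.
by rewrite mulf_div !tofracM.
Qed.

Lemma freg_opp f P : freg f P -> freg (- f) P.
Proof.
move=> [a1 [b1 [H1 ->]]]; exists (- a1), b1; split; first exact: H1.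
by rewrite tofracN mulNr.
Qed.

Lemma freg_fC c P : freg (fC c) P.
Proof. exact: freg_poly. Qed.

Lemma ford_decomp (h : RF) (P : F) : h != 0 ->
  exists (n d : {poly F}) (k l : nat),
    [/\ n.[P] != 0, d.[P] != 0, ford P h = k%:Z - l%:Z &
      h = (n * ('X - P%:P) ^+ k)%:F / (d * ('X - P%:P) ^+ l)%:F].
Proof.
move=> h0.
set n0 := \n_(repr h); set d0 := \d_(repr h).
have hE : h = n0%:F / d0%:F by exact: frac_numden.
have d00 : d0 != 0 by exact: denom_ratioP.
have n00 : n0 != 0.
  apply: contraNneq h0 => e; rewrite hE e tofrac0 mul0r; exact: eqxx.
have [k [n Hn En]] := multiplicity_XsubC n0 P.
have [l [d Hd Ed]] := multiplicity_XsubC d0 P.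
rewrite n00 /= in Hn; rewrite d00 /= in Hd.
exists n, d, k, l; split; [exact: Hn | exact: Hd | | ].
  rewrite /ford -/n0 -/d0 En Ed (mupMr _ Hn) (mupMr _ Hd) !mup_XsubCX eqxx; reflexivity.
by rewrite hE En Ed.
Qed.


Lemma ford_ge0_reg (h : RF) (P : F) : h != 0 -> (0 <= ford P h) -> freg h P.
Proof.
move=> h0; have [n [d [k [l [Hn Hd -> ->]]]]] := @ford_decomp h P h0.
rewrite subr_ge0 lez_nat => lk.
exists (n * ('X - P%:P) ^+ (k - l)), d; split; first exact: Hd.
have E : ('X - P%:P) ^+ k = ('X - P%:P) ^+ (k - l) * ('X - P%:P) ^+ l.
  by rewrite -exprD subnK.
have e0 : (('X - P%:P) ^+ l)%:F != 0 :> RF.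
  rewrite tofrac_eq0; apply: expf_neq0; by rewrite polyXsubC_eq0.
by rewrite E mulrA !tofracM -mulf_div (divff e0) mulr1.
Qed.

Lemma ford_eq0_unit (h : RF) (P : F) : h != 0 -> ford P h = 0 ->
  exists a b : {poly F}, [/\ a.[P] != 0, b.[P] != 0 & h = a%:F / b%:F].
Proof.
move=> h0; have [n [d [k [l [Hn Hd -> ->]]]]] := @ford_decomp h P h0.
move/eqP; rewrite subr_eq0 => /eqP [] <-.
exists n, d; split; [exact: Hn | exact: Hd | ].
have e0 : (('X - P%:P) ^+ k)%:F != 0 :> RF.
  rewrite tofrac_eq0; apply: expf_neq0; by rewrite polyXsubC_eq0.
by rewrite !tofracM -mulf_div (divff e0) mulr1.
Qed.

Lemma freg_cancel (g h : RF) (P : F) (a b : {poly F}) :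
  a.[P] != 0 -> b.[P] != 0 -> g = a%:F / b%:F -> freg (g * h) P -> freg h P.
Proof.
move=> Ha Hb -> H.
have na := tofrac_neq0 Ha; have nb := tofrac_neq0 Hb.
have -> : h = a%:F / b%:F * h * (b%:F / a%:F).
  by rewrite [_ / _ * h]mulrC -mulrA mulf_div [b%:F * _]mulrC (divff (mulf_neq0 na nb)) mulr1.
apply: freg_mul; first exact: H.
exists b, a; split; [exact: Ha | reflexivity].
Qed.

Lemma fpole_root (h : RF) P : fpole h P -> root (\d_(repr h)) P.
Proof.
move=> Hp; apply/negPn/negP => H; apply: Hp.
exists (\n_(repr h)), (\d_(repr h)); split; [exact: H | exact: frac_numden].
Qed.

End Gen.

Section Gen2.
Variable F : fieldType.
Local Notation RF := {fraction {poly F}}.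

Lemma iter_find (pl L : F -> Prop) (f : F -> F) (P : F) (p : {poly F}) :
  p != 0 -> (forall Q, pl Q -> root p Q) -> injective (fun k => iter k f P) ->
  (forall Q, pl Q -> L Q \/ pl (f Q)) -> pl P -> exists m, L (iter m f P).
Proof.
move=> p0 Hr Hinj Hs HP.
have H : forall k, (exists m, L (iter m f P)) \/
                   (forall j, (j <= k)%N -> pl (iter j f P)).
  elim=> [|k [IH|IH]].
  - by right => j; rewrite leqn0 => /eqP ->.
  - by left.
  - case: (Hs _ (IH k (leqnn k))) => [HL|Hn]; first by left; exists k.
    right => j; rewrite leq_eqVlt => /orP [/eqP ->|]; first exact: Hn.
    rewrite ltnS; exact: IH.
case: (H (size p)) => [//|Hall]; exfalso.
have A : all (root p) (mkseq (fun k => iter k f P) (size p).+1).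
  apply/allP => z /mapP [j]; rewrite mem_iota add0n => /andP [_ Hj] ->.
  by apply: Hr; apply: Hall; rewrite -ltnS.
have U := @mkseq_uniq _ _ (size p).+1 Hinj.
have := max_poly_roots p0 A U; by rewrite size_mkseq ltnNge leqnSn.
Qed.

Lemma pevalE (p : {poly F}) (u : RF) :
  peval_frac p u = (map_poly (@FracField.tofrac _ \o polyC) p).[u].
Proof. by []. Qed.

Lemma mX : map_poly (@FracField.tofrac _ \o (@polyC F)) 'X = 'X :> {poly RF}.
Proof. exact: map_polyX. Qed.
Lemma mC (a : F) : map_poly (@FracField.tofrac _ \o (@polyC F)) a%:P = (fC a)%:P :> {poly RF}.
Proof. exact: map_polyC. Qed.
Lemma mD (p r : {poly F}) : map_poly (@FracField.tofrac _ \o (@polyC F)) (p + r) = map_poly (@FracField.tofrac _ \o (@polyC F)) p + map_poly (@FracField.tofrac _ \o (@polyC F)) r :> {poly RF}.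
Proof. exact: rmorphD. Qed.
Lemma mM (p r : {poly F}) : map_poly (@FracField.tofrac _ \o (@polyC F)) (p * r) = map_poly (@FracField.tofrac _ \o (@polyC F)) p * map_poly (@FracField.tofrac _ \o (@polyC F)) r :> {poly RF}.
Proof. exact: rmorphM. Qed.

Lemma peval_MXaddC (p : {poly F}) (a : F) (u : RF) :
  peval_frac (p * 'X + a%:P) u = peval_frac p u * u + fC a.
Proof. by rewrite !pevalE mD mM mX mC hornerMXaddC. Qed.

Lemma peval_M (p r : {poly F}) (u : RF) : peval_frac (p * r) u = peval_frac p u * peval_frac r u.
Proof. by rewrite !pevalE rmorphM hornerM. Qed.

Definition revP (c : F) (p : {poly F}) (m : nat) (r : {poly F}) :=
  r%:F = fX F ^+ m * peval_frac p (fC c / fX F) /\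
  forall z, z != 0 -> r.[z] = z ^+ m * p.[c / z].

Lemma fX_neq0 : fX F != 0.
Proof. by rewrite /fX tofrac_eq0 polyX_eq0. Qed.

Lemma alg1 (K : fieldType) (x c Y Q : K) : x != 0 ->
  c * (Y * Q) = Y * x * (Q * (c / x)).
Proof. move=> x0; field; exact: x0. Qed.

Lemma alg2 (K : comPzRingType) (N B A D Y : K) :
  N * B = A * D -> N * (Y * B) = Y * A * D.
Proof. by move=> e; rewrite mulrCA e mulrA. Qed.

Lemma revP_ex (c : F) (p : {poly F}) : exists m r, revP c p m r.
Proof.
elim/poly_ind: p => [|p a [m [r [E1 E2]]]].
  exists 0%N, 0; split.
    by rewrite tofrac0 pevalE rmorph0 horner0 mulr0.
  by move=> z _; rewrite !horner0 mulr0.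
exists m.+1, (c%:P * r + a%:P * 'X ^+ m.+1); split.
  rewrite peval_MXaddC.
  rewrite tofracD !tofracM tofracXn E1.
  rewrite mulrDr; congr (_ + _); last by rewrite mulrC.
  rewrite exprSr; exact: (@alg1 _ (fX F) _ _ _ fX_neq0).
move=> z z0; rewrite hornerD !hornerM !hornerC hornerXn E2 // hornerMXaddC.
rewrite exprSr; field; exact: z0.
Qed.

Lemma revP_lift (c : F) (p : {poly F}) m (r : {poly F}) k : revP c p m r -> revP c p (m + k) (r * 'X ^+ k).
Proof.
move=> [E1 E2]; split.
  by rewrite tofracM E1 tofracXn exprD mulrAC.
by move=> z z0; rewrite hornerM hornerXn E2 // exprD mulrAC.
Qed.

Lemma freg_comp (c : F) (h : RF) (P : F) :
  fcomp h (fC c / fX F) = h -> P != 0 -> freg h (c / P) -> freg h P.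
Proof.
move=> Hc P0 [a [b [Hb Eab]]].
have [h0|h0] := eqVneq h 0.
  exists 0, 1; split; first by rewrite hornerC oner_neq0.
  by rewrite h0 tofrac0 mul0r.
set u := fC c / fX F.
set n := \n_(repr h); set d := \d_(repr h).
have hE : h = n%:F / d%:F := frac_numden h.
have dF : d%:F != 0 :> RF by rewrite tofrac_eq0 denom_ratioP.
have bF : b%:F != 0 :> RF := tofrac_neq0 Hb.
have E1 : n%:F / d%:F = a%:F / b%:F := etrans (esym hE) Eab.
move: E1 => /eqP; rewrite (eqr_div _ _ dF bF) -!tofracM tofrac_eq => /eqP nb.
have NB : peval_frac n u * peval_frac b u = peval_frac a u * peval_frac d u.
  by rewrite -!peval_M nb.
have [ma [ra Ra]] := revP_ex c a.
have [mb [rb Rb]] := revP_ex c b.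
have [Ra1 _] := revP_lift mb Ra.
have [Rb1 Rb2] := revP_lift ma Rb.
rewrite addnC in Rb1 Rb2.
set ra' := ra * 'X ^+ mb in Ra1; set rb' := rb * 'X ^+ ma in Rb1 Rb2.
have rbP : rb'.[P] != 0.
  rewrite Rb2 //; apply: mulf_neq0; first exact: expf_neq0.
  exact: Hb.
have rbF : rb'%:F != 0 :> RF := tofrac_neq0 rbP.
have BF : peval_frac b u != 0.
  apply: contraNneq rbF => e; rewrite Rb1 e mulr0; exact: eqxx.
have Hc' : peval_frac n u / peval_frac d u = h.
  by rewrite -[RHS]Hc /fcomp.
have DF : peval_frac d u != 0.
  apply: contraNneq h0 => e; rewrite -Hc' e invr0 mulr0; exact: eqxx.
exists ra', rb'; split; first exact: rbP.
rewrite -Hc'; apply/eqP; rewrite (eqr_div _ _ DF rbF) Ra1 Rb1.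
apply/eqP; exact: alg2 NB.
Qed.

End Gen2.

Section Main.
Variable R : rcfType.
Local Notation C := R[i].
Local Notation RF := {fraction {poly C}}.

Lemma rc_inj : injective (@rc R).
Proof. move=> u v; rewrite /rc; exact: complexI. Qed.

Lemma qexp_inj (q : R) : q != 0 -> (forall n : nat, (0 < n)%N -> q ^+ n != 1) ->
  forall i j, rc q ^+ i = rc q ^+ j -> i = j.
Proof.
move=> q0 hqn.
have key : forall i j, (i <= j)%N -> rc q ^+ i = rc q ^+ j -> i = j.
  move=> i j hij e.
  have qc0 : rc q != 0.
    apply: contraNneq q0 => e0; apply/eqP; apply: rc_inj; rewrite e0 /rc; exact: rmorph0.
  move: e; rewrite -(subnK hij) exprD -{1}[rc q ^+ i]mul1r => /mulIf.
  move=> /(_ (expf_neq0 _ qc0)) /esym e.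
  case k0: (j - i)%N => [|k]; first by [].
  exfalso; have := hqn k.+1 (ltn0Sn k); rewrite -k0; apply/negP/negPn/eqP.
  apply: rc_inj; rewrite /rc rmorphXn rmorph1 /=; exact: e.
move=> i j e; case: (leqP i j) => [hij|/ltnW hji]; first exact: key.
by symmetry; apply: key hji (esym e).
Qed.


Lemma iter_div (c P : C) m : iter m (fun z => z / c) P = c ^- m * P.
Proof.
elim: m => [|m IH]; first by rewrite expr0 invr1 mul1r.
by rewrite iterS IH exprSr invfM mulrAC.
Qed.

Lemma iter_mul (c P : C) m : iter m (fun z => c * z) P = c ^+ m * P.
Proof.
elim: m => [|m IH]; first by rewrite expr0 mul1r.
by rewrite iterS IH exprS mulrA.
Qed.

End Main.

Unset Implicit Arguments.
Set Strict Implicit.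

Theorem lemma3p7 (R : rcfType) (S : {set 'I_3 * 'I_3})
  (d : 'I_3 -> 'I_3 -> R) (a b t q : R)
  (x y : {fraction {poly R[i]}}) (P1 P2 P3 P4 : R[i])
  (h1 h2 : {fraction {poly R[i]}}) :
  ((1 : 'I_3), (1 : 'I_3)) \notin S ->
  (forall i j, (i, j) \in S -> 0 < d i j) ->
  (forall i j, (i, j) \notin S -> d i j = 0) ->
  0 < a -> 0 < b ->
  transcendental_over (params d a b) (rc t) ->
  q != 0 -> (forall n : nat, (0 < n)%N -> q ^+ n != 1) ->
  kernel_eval d t x y = 0 ->
  (exists N D : {poly {poly R[i]}},
      peval2_frac D x y != 0 /\ peval2_frac N x y = fX _ * peval2_frac D x y) ->
  fcomp x (iota1 _) = x ->
  fcomp y (iota2 (rc q)) = y ->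
  divisor_is_2zeros (gamma1 d a t x y) P1 P2 ->
  divisor_is_2zeros (gamma2 d b t x y) P3 P4 ->
  P1 != 0 -> P2 != 0 -> P3 != 0 -> P4 != 0 ->
  gamma1 d a t x y * h1 + gamma2 d b t x y * h2 + fC (rc (omega a b)) = 0 ->
  fcomp h1 (iota1 _) = h1 ->
  fcomp h2 (iota2 (rc q)) = h2 ->
  (forall P : R[i], P != 0 -> fpole h1 P ->
     exists m n : nat,
       (rc q) ^- m * P \in L1m q P1 P2 P3 P4 /\ (rc q) ^+ n * P \in L1p q P1 P2 P3 P4)
  /\
  (forall P : R[i], P != 0 -> fpole h2 P ->
     exists m n : nat,
       (rc q) ^- m * P \in L2m q P1 P2 P3 P4 /\ (rc q) ^+ n * P \in L2p q P1 P2 P3 P4).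
Proof.
move=> _ _ _ _ _ _ hq0 hqn _ _ _ _ hg1 hg2 P10 P20 P30 P40 heq hh1 hh2.
set g1 := gamma1 d a t x y in hg1 heq.
set g2 := gamma2 d b t x y in hg2 heq.
set w := fC (rc (omega a b)) in heq.
have qne0 : rc q != 0.
  apply: contraNneq hq0 => e0; apply/eqP; apply: rc_inj; rewrite e0 /rc; exact: (esym (rmorph0 _)).
set q' := rc q in qne0 *.
case: hg1 => g1n0 hf1 _; case: hg2 => g2n0 hf2 _.
have hh1' : fcomp h1 (fC 1 / fX _) = h1.
  by rewrite /fC polyC1 tofrac1 div1r.
have T1 : forall Q, Q != 0 -> fpole h1 Q -> fpole h1 Q^-1.
  move=> Q Q0 HQ Hr; apply: HQ; apply: (freg_comp hh1' Q0); by rewrite div1r.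
have T2 : forall Q, Q != 0 -> fpole h2 Q -> fpole h2 (q' / Q).
  move=> Q Q0 HQ Hr; apply: HQ; exact: (freg_comp hh2 Q0).
have E1 : g1 * h1 = - (g2 * h2 + w).
  apply/eqP; rewrite -addr_eq0 addrA heq; exact: eqxx.
have E2 : g2 * h2 = - (g1 * h1 + w).
  apply/eqP; rewrite -addr_eq0 addrA [g2 * h2 + _]addrC heq; exact: eqxx.
have T3 : forall Q, Q != 0 -> fpole h1 Q -> Q = P1 \/ Q = P2 \/ fpole h2 Q.
  move=> Q Q0 HQ.
  case: (eqVneq Q P1) => [->|n1]; first by left.
  case: (eqVneq Q P2) => [->|n2]; first by right; left.
  right; right => Hr2; apply: HQ.
  have hu : ford Q g1 = 0 by rewrite hf1 (negbTE n1) (negbTE n2) (negbTE Q0).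
  have [a1 [b1 [Ha Hb Eg]]] := ford_eq0_unit g1n0 hu.
  have hr2 : freg g2 Q.
    apply: (ford_ge0_reg g2n0); rewrite hf2 (negbTE Q0) subr0.
    by apply: addr_ge0.
  apply: (freg_cancel Ha Hb Eg); rewrite E1; apply: freg_opp.
  apply: freg_add; [exact: freg_mul hr2 Hr2 | exact: freg_fC].
have T4 : forall Q, Q != 0 -> fpole h2 Q -> Q = P3 \/ Q = P4 \/ fpole h1 Q.
  move=> Q Q0 HQ.
  case: (eqVneq Q P3) => [->|n1]; first by left.
  case: (eqVneq Q P4) => [->|n2]; first by right; left.
  right; right => Hr1; apply: HQ.
  have hu : ford Q g2 = 0 by rewrite hf2 (negbTE n1) (negbTE n2) (negbTE Q0).
  have [a1 [b1 [Ha Hb Eg]]] := ford_eq0_unit g2n0 hu.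
  have hr1 : freg g1 Q.
    apply: (ford_ge0_reg g1n0); rewrite hf1 (negbTE Q0) subr0.
    by apply: addr_ge0.
  apply: (freg_cancel Ha Hb Eg); rewrite E2; apply: freg_opp.
  apply: freg_add; [exact: freg_mul hr1 Hr1 | exact: freg_fC].
have injd : forall P : R[i], P != 0 -> injective (fun k => iter k (fun z => z / q') P).
  move=> P P0 i j /=; rewrite !iter_div => /(mulIf P0) /invr_inj.
  exact: qexp_inj hq0 hqn i j.
have injm : forall P : R[i], P != 0 -> injective (fun k => iter k (fun z => q' * z) P).
  move=> P P0 i j /=; rewrite !iter_mul => /(mulIf P0).
  exact: qexp_inj hq0 hqn i j.
have inv0 : forall Q : R[i], Q != 0 -> Q^-1 != 0 by move=> Q Q0; rewrite invr_eq0.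
have dq0 : forall Q : R[i], Q != 0 -> q' / Q != 0.
  by move=> Q Q0; rewrite mulf_neq0 // invr_eq0.
have mq0 : forall Q : R[i], Q != 0 -> q' * Q != 0.
  by move=> Q Q0; rewrite mulf_neq0.
have qd0 : forall Q : R[i], Q != 0 -> Q / q' != 0.
  by move=> Q Q0; rewrite mulf_neq0 // invr_eq0.
have s1f : forall Q : R[i], Q != 0 /\ fpole h1 Q ->
    Q \in L1p q P1 P2 P3 P4 \/ (q' * Q != 0 /\ fpole h1 (q' * Q)).
  move=> Q [Q0 HQ].
  have H1' := T1 Q Q0 HQ.
  case: (T3 _ (inv0 _ Q0) H1') => [e|[e|H2]].
  * by left; rewrite /L1m /L1p /L2m /L2p -/q' -[Q]invrK e !inE eqxx.
  * by left; rewrite /L1m /L1p /L2m /L2p -/q' -[Q]invrK e !inE eqxx orbT.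
  have := T2 _ (inv0 _ Q0) H2; rewrite invrK => H2'.
  case: (T4 _ (mq0 _ Q0) H2') => [e|[e|H1'']].
  * by left; rewrite /L1m /L1p /L2m /L2p -/q' -e [q' * Q]mulrC (mulfK qne0) !inE eqxx !orbT.
  * by left; rewrite /L1m /L1p /L2m /L2p -/q' -e [q' * Q]mulrC (mulfK qne0) !inE eqxx !orbT.
  by right; split; [exact: mq0 | exact: H1''].
have s1b : forall Q : R[i], Q != 0 /\ fpole h1 Q ->
    Q \in L1m q P1 P2 P3 P4 \/ (Q / q' != 0 /\ fpole h1 (Q / q')).
  move=> Q [Q0 HQ].
  case: (T3 _ Q0 HQ) => [e|[e|H2]].
  * by left; rewrite /L1m /L1p /L2m /L2p -/q' e !inE eqxx.
  * by left; rewrite /L1m /L1p /L2m /L2p -/q' e !inE eqxx orbT.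
  have H2' := T2 _ Q0 H2.
  case: (T4 _ (dq0 _ Q0) H2') => [e|[e|H1']].
  * by left; rewrite /L1m /L1p /L2m /L2p -/q' -e (divKf qne0) !inE eqxx !orbT.
  * by left; rewrite /L1m /L1p /L2m /L2p -/q' -e (divKf qne0) !inE eqxx !orbT.
  have := T1 _ (dq0 _ Q0) H1'; rewrite invf_div => H1''.
  by right; split; [exact: qd0 | exact: H1''].
have s2f : forall Q : R[i], Q != 0 /\ fpole h2 Q ->
    Q \in L2p q P1 P2 P3 P4 \/ (q' * Q != 0 /\ fpole h2 (q' * Q)).
  move=> Q [Q0 HQ].
  case: (T4 _ Q0 HQ) => [e|[e|H1]].
  * by left; rewrite /L1m /L1p /L2m /L2p -/q' e !inE eqxx !orbT.
  * by left; rewrite /L1m /L1p /L2m /L2p -/q' e !inE eqxx !orbT.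
  have H1' := T1 _ Q0 H1.
  case: (T3 _ (inv0 _ Q0) H1') => [e|[e|H2]].
  * by left; rewrite /L1m /L1p /L2m /L2p -/q' -[Q]invrK e !inE eqxx.
  * by left; rewrite /L1m /L1p /L2m /L2p -/q' -[Q]invrK e !inE eqxx orbT.
  have := T2 _ (inv0 _ Q0) H2; rewrite invrK => H2'.
  by right; split; [exact: mq0 | exact: H2'].
have s2b : forall Q : R[i], Q != 0 /\ fpole h2 Q ->
    Q \in L2m q P1 P2 P3 P4 \/ (Q / q' != 0 /\ fpole h2 (Q / q')).
  move=> Q [Q0 HQ].
  have H2' := T2 _ Q0 HQ.
  case: (T4 _ (dq0 _ Q0) H2') => [e|[e|H1]].
  * by left; rewrite /L1m /L1p /L2m /L2p -/q' -e (divKf qne0) !inE eqxx !orbT.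
  * by left; rewrite /L1m /L1p /L2m /L2p -/q' -e (divKf qne0) !inE eqxx !orbT.
  have := T1 _ (dq0 _ Q0) H1; rewrite invf_div => H1'.
  case: (T3 _ (qd0 _ Q0) H1') => [e|[e|H2]].
  * by left; rewrite /L1m /L1p /L2m /L2p -/q' -e [q' * (Q / q')]mulrC (divfK qne0) !inE eqxx.
  * by left; rewrite /L1m /L1p /L2m /L2p -/q' -e [q' * (Q / q')]mulrC (divfK qne0) !inE eqxx orbT.
  by right; split; [exact: qd0 | exact: H2].
split => P P0 HP.
- have [m Hm] := @iter_find _ (fun Q => Q != 0 /\ fpole h1 Q)
     (fun z => z \in L1m q P1 P2 P3 P4) (fun z => z / q') P (\d_(repr h1))
     (denom_ratioP _) (fun Q H => fpole_root H.2) (injd P P0) s1b (conj P0 HP).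
  have [n Hn] := @iter_find _ (fun Q => Q != 0 /\ fpole h1 Q)
     (fun z => z \in L1p q P1 P2 P3 P4) (fun z => q' * z) P (\d_(repr h1))
     (denom_ratioP _) (fun Q H => fpole_root H.2) (injm P P0) s1f (conj P0 HP).
  by exists m, n; rewrite -iter_div -iter_mul.
- have [m Hm] := @iter_find _ (fun Q => Q != 0 /\ fpole h2 Q)
     (fun z => z \in L2m q P1 P2 P3 P4) (fun z => z / q') P (\d_(repr h2))
     (denom_ratioP _) (fun Q H => fpole_root H.2) (injd P P0) s2b (conj P0 HP).
  have [n Hn] := @iter_find _ (fun Q => Q != 0 /\ fpole h2 Q)
     (fun z => z \in L2p q P1 P2 P3 P4) (fun z => q' * z) P (\d_(repr h2))
     (denom_ratioP _) (fun Q H => fpole_root H.2) (injm P P0) s2f (conj P0 HP).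
  by exists m, n; rewrite -iter_div -iter_mul.
Qed.
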